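(* Let $G$ be an $n$-vertex connected graph with chromatic number $\chi \geq 2$, and suppose that $\chi$ divides $n$. Then \[ {\rm ABC}(G) \leq n \sqrt{\frac{\chi(n-1)-n}{2\chi}}, \] with equality if and only if $G \cong T_{n,\chi}$.
   Context: All graphs are simple and undirected. For a graph $G$ and a vertex $v$, $d(v)$ denotes the degree of $v$. The atom-bond connectivity (ABC) index is ${\rm ABC}(G)=\sum_{uv\in E(G)} \sqrt{\frac{d(u)+d(v)-2}{d(u)d(v)}}$. $T_{n,l}$ denotes the complete $l$-partite graph on $n$ vertices whose part sizes $t_1,\dots,t_l$ satisfy $|t_i - t_j| \leq 1$ for all $i,j$. *)

(* Defs.v *)
From mathcomp Require Import all_boot all_order all_algebra.
Set Implicit Arguments.
Unset Strict Implicit.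
Unset Printing Implicit Defensive.
Import Order.TTheory GRing.Theory Num.Theory.

Definition simple_graph (T : finType) (e : rel T) : Prop :=
  symmetric e /\ irreflexive e.

Definition deg (T : finType) (e : rel T) (v : T) : nat := #|[set u | e v u]|.

Definition edges (T : finType) (e : rel T) : {set {set T}} :=
  [set E : {set T} | [exists u, exists v, e u v && (E == [set u; v])]].

Definition connected_graph (T : finType) (e : rel T) : Prop :=
  forall u v : T, fingraph.connect e u v.

Definition colorable (T : finType) (e : rel T) (k : nat) : Prop :=
  exists f : T -> 'I_k, forall u v, e u v -> f u != f v.

Definition is_chromatic_number (T : finType) (e : rel T) (chi : nat) : Prop :=
  colorable e chi /\ forall k, k < chi -> ~ colorable e k.

Local Open Scope ring_scope.

Definition ABC (R : rcfType) (T : finType) (e : rel T) : R :=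
  \sum_(E in edges e)
     Num.sqrt ((\sum_(v in E) (deg e v)%:R - 2) / (\prod_(v in E) deg e v)%:R).

(* Turán graph T_{n,l} on vertex set 'I_n: vertex i lies in part (i mod l);
   two vertices are adjacent iff they lie in different parts.  Part sizes
   then differ by at most one. *)
Definition turan_adj (n l : nat) : rel 'I_n :=
  fun i j => (i %% l)%N != (j %% l)%N.

Definition isomorphic_to_turan (T : finType) (e : rel T) (l : nat) : Prop :=
  exists f : T -> 'I_#|T|, bijective f /\
    forall u v, e u v = turan_adj l (f u) (f v).

(* Main.v *)
Require Import Defs.
From mathcomp Require Import all_boot all_order all_algebra.
From mathcomp Require Import ring lra zify.
Import Order.TTheory GRing.Theory Num.Theory.


Lemma big_pair (R : Type) (idx : R) (op : Monoid.com_law idx) (T : finType) (u v : T) (F : T -> R) :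
  u != v -> \big[op/idx]_(w in [set u; v]) F w = op (F u) (F v).
Proof.
by move=> uv; rewrite big_setU1 ?big_set1 // inE.
Qed.


Lemma struct_iso (T : finType) (e : rel T) (chi s0n : nat) (f : T -> 'I_chi) :
  simple_graph e -> (forall u v, e u v -> f u != f v) -> #|T| = s0n * chi ->
  (forall v, deg e v + #|[set w | f w == f v]| = #|T|) ->
  (forall v, #|[set w | f w == f v]| = s0n) -> isomorphic_to_turan e chi.
Proof.
move=> [sym irr] hf hN hdeg hsz.
have adj : forall u v, e u v = (f u != f v).
  move=> u v; apply/idP/idP; first exact: hf.
  move=> fuv.
  have sub : [set w | e v w] \subset ~: [set w | f w == f v].
    apply/subsetP => w; rewrite !inE => evw; rewrite eq_sym; exact: hf.
  have ceq : #|[set w | e v w]| = #|~: [set w | f w == f v]|.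
    have := cardsC [set w | f w == f v]; have := hdeg v; rewrite /deg; lia.
  have : [set w | e v w] = ~: [set w | f w == f v].
    by apply/eqP; rewrite eqEcard sub ceq leqnn.
  move/setP => /(_ u); rewrite !inE fuv => evu.
  by rewrite sym evu.
pose idx v := index v (enum [set w | f w == f v]).
have idx_lt : forall v, idx v < s0n.
  move=> v; rewrite -(hsz v) cardE index_mem mem_enum inE //.
have hlt : forall v, idx v * chi + f v < #|T|.
  move=> v; have := idx_lt v; have := ltn_ord (f v); rewrite hN => h1 h2.
  have := leq_mul h2 (leqnn chi); rewrite mulSn; lia.
pose h v : 'I_#|T| := Ordinal (hlt v).
have hmod : forall v, (h v) %% chi = f v.
  move=> v; rewrite /= modnMDl modn_small //.
have hinj : injective h.
  move=> u v huv.
  have fe : f u = f v by apply: ord_inj; rewrite -hmod -(hmod v) huv.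
  have ie : idx u = idx v.
    have : idx u * chi + f u = idx v * chi + f v by move: huv => /(congr1 val).
    rewrite fe => /eqP; rewrite eqn_add2r eqn_pmul2r ?(leq_ltn_trans _ (ltn_ord (f v))) //.
    by move/eqP.
  have mu : u \in enum [set w | f w == f v] by rewrite mem_enum inE fe.
  have mv : v \in enum [set w | f w == f v] by rewrite mem_enum inE.
  move: (nth_index u mu) (nth_index u mv).
  rewrite /idx fe in ie; rewrite ie => h1 h2.
  exact: (etrans (esym h1) h2).
exists h; split.
  by apply: inj_card_bij => //; rewrite card_ord.
move=> u v; rewrite adj /turan_adj !hmod.
by [].
Qed.


Lemma count_mod (N chi s0n r : nat) : 0 < chi -> N = s0n * chi -> r < chi ->
  #|[set j : 'I_N | j %% chi == r]| = s0n.
Proof.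
move=> chi0 hN hr.
have gl : forall j : 'I_N, j %/ chi < s0n by move=> j; rewrite ltn_divLR // -hN.
pose g (j : 'I_N) : 'I_s0n := Ordinal (gl j).
have -> : #|[set j : 'I_N | j %% chi == r]| = #|g @: [set j : 'I_N | j %% chi == r]|.
  rewrite card_in_imset // => j1 j2; rewrite !inE => /eqP h1 /eqP h2 /(congr1 val) /= h.
  by apply: val_inj; rewrite /= (divn_eq j1 chi) (divn_eq j2 chi) h h1 h2.
have -> : g @: [set j : 'I_N | j %% chi == r] = setT.
  apply/setP => q; rewrite inE; apply/imsetP.
  have hq : q * chi + r < N.
    have := ltn_ord q; rewrite hN => hq.
    have := leq_mul hq (leqnn chi); rewrite mulSn; lia.
  exists (Ordinal hq); first by rewrite inE /= modnMDl modn_small.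
  apply: val_inj; rewrite /= divnMDl // divn_small //.
  by rewrite addn0.
by rewrite cardsT card_ord.
Qed.

Lemma turan_deg (T : finType) (e : rel T) (chi s0n : nat) :
  0 < chi -> #|T| = s0n * chi -> isomorphic_to_turan e chi ->
  forall v, deg e v = #|T| - s0n.
Proof.
move=> chi0 hN [h [hb he]] v.
have hi := bij_inj hb.
pose r := (h v : nat) %% chi.
have : [set u | e v u] = h @^-1: [set j : 'I_#|T| | j %% chi != r].
  by apply/setP => u; rewrite !inE he /turan_adj eq_sym.
rewrite /deg => ->.
have -> : #|h @^-1: [set j : 'I_#|T| | j %% chi != r]| = #|[set j : 'I_#|T| | j %% chi != r]|.
  rewrite -(card_imset _ hi); apply: eq_card => j.
  apply/imsetP/idP.
    by case=> u; rewrite !inE => hu ->.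
  move=> hj; case: hb => hinv h1 h2.
  by exists (hinv j); [rewrite inE h2 | rewrite h2].
have -> : [set j : 'I_#|T| | j %% chi != r] = ~: [set j : 'I_#|T| | j %% chi == r].
  by apply/setP => j; rewrite !inE.
have := cardsC [set j : 'I_#|T| | j %% chi == r].
rewrite (@count_mod #|T| chi s0n r chi0 hN (ltn_pmod _ chi0)) card_ord; lia.
Qed.


Lemma edgesP (T : finType) (e : rel T) E :
  reflect (exists u v, e u v /\ E = [set u; v]) (E \in edges e).
Proof.
rewrite /edges inE; apply: (iffP existsP) => [[u /existsP [v /andP [h /eqP ->]]]|[u [v [h ->]]]].
  by exists u, v.
by exists u; apply/existsP; exists v; rewrite h eqxx.
Qed.

Lemma card_edges_at (T : finType) (e : rel T) (w : T) : simple_graph e ->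
  #|[set E in edges e | w \in E]| = deg e w.
Proof.
move=> [sym irr].
have -> : [set E in edges e | w \in E] = (fun u => [set w; u]) @: [set u | e w u].
  apply/setP => E; rewrite inE; apply/andP/imsetP.
    case=> /edgesP [a [b [hab ->]]].
    rewrite !inE => /orP [/eqP ->|/eqP ->].
      by exists b; rewrite // inE.
    by exists a; [rewrite inE sym | rewrite setUC].
  case=> u; rewrite inE => hu ->; split; last by rewrite !inE eqxx.
  by apply/edgesP; exists w, u.
rewrite card_in_imset // => u1 u2; rewrite !inE => h1 h2 heq.
have : u1 \in [set w; u2] by rewrite -heq !inE eqxx orbT.
rewrite !inE => /orP [/eqP h|/eqP //].
by move: h1; rewrite h irr.
Qed.

Local Open Scope ring_scope.
Lemma handshake (R : rcfType) (T : finType) (e : rel T) (H : T -> R) : simple_graph e ->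
  \sum_(E in edges e) \sum_(w in E) H w = \sum_w (deg e w)%:R * H w.
Proof.
move=> sg.
under eq_bigr => E _ do rewrite big_mkcond /=.
rewrite exchange_big /=; apply: eq_bigr => w _.
rewrite -big_mkcondr /= -(@card_edges_at _ e w sg).
rewrite sumr_const mulr_natl; congr (_ *+ _).
by apply: eq_card => E; rewrite [RHS]inE.
Qed.


Local Open Scope ring_scope.

Definition Qp {R : rcfType} (D a b : R) :=
  D^+3*(a^+2+b^+2) + 2*D^+2*a*b - 2*D*a*b*(a+b) + 2*(1-D)*a^+2*b^+2.

Lemma Qprop (R : rcfType) (D a b : R) : 1 <= D -> a^+2 <= (D-1)^+2 -> b^+2 <= (D-1)^+2 ->
  0 <= Qp D a b /\ (1 < D -> Qp D a b = 0 -> a = 0 /\ b = 0).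
Proof.
move=> D1 ha hb.
have e : Qp D a b
  = (D*(a+b)-a*b)^+2 + (D-1)*(a^+2+b^+2)*(D^+2 - (2*D-1)*(D-1)/2)
    + (2*D-1)/2 * ((D-1)^+2*(a^+2+b^+2) - 2*a^+2*b^+2).
  by rewrite /Qp; field.
rewrite e.
have h1 : 0 <= (D-1)^+2*(a^+2+b^+2) - 2*a^+2*b^+2.
  have : a^+2*b^+2 <= a^+2*(D-1)^+2 by rewrite ler_wpM2l // sqr_ge0.
  have : a^+2*b^+2 <= (D-1)^+2 * b^+2 by rewrite ler_wpM2r // sqr_ge0.
  lra.
have hc : 0 < D^+2 - (2*D-1)*(D-1)/2 by nra.
have ha2 := sqr_ge0 a; have hb2 := sqr_ge0 b.
have h2 : 0 <= (D-1)*(a^+2+b^+2)*(D^+2 - (2*D-1)*(D-1)/2).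
  apply: mulr_ge0; first by apply: mulr_ge0; lra.
  lra.
have h3 : 0 <= (2*D-1)/2 * ((D-1)^+2*(a^+2+b^+2) - 2*a^+2*b^+2) by apply: mulr_ge0 => //; lra.
have h4 := sqr_ge0 (D*(a+b)-a*b).
split; first lra.
move=> D1' H0.
have : (D-1)*(a^+2+b^+2)*(D^+2 - (2*D-1)*(D-1)/2) = 0 by lra.
move/eqP; rewrite !mulf_eq0 => /orP [/orP [|]|]; last (by move=> /eqP; lra).
  by move=> /eqP; lra.
move=> /eqP hab.
have a0 : a^+2 = 0 by lra.
have b0 : b^+2 = 0 by lra.
by split; apply/eqP; rewrite -sqrf_eq0; apply/eqP.
Qed.


Definition Gf {R : rcfType} (D s0 z : R) := 2*(D-1) - s0 + s0^+2/z.

Lemma step1 (R : rcfType) (K D g : R) : 1 <= D -> 0 <= K -> K^+2 = (D-1)/2 -> 0 <= g ->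
  4*K*Num.sqrt g <= 2*(D-1)/D + D*g.
Proof.
move=> D1 K0 K2 g0.
have r0 : 0 <= Num.sqrt g by apply: sqrtr_ge0.
have r2 : (Num.sqrt g)^+2 = g by apply: sqr_sqrtr.
have -> : 2*(D-1) = 4*K^+2 by rewrite K2; field.
have -> : D*g = D*(Num.sqrt g)^+2 by rewrite r2.
rewrite -subr_ge0.
have -> : 4 * K ^+ 2 / D + D * Num.sqrt g ^+ 2 - 4 * K * Num.sqrt g = (2*K - D*Num.sqrt g)^+2/D.
  by field; apply/eqP; lra.
by apply: divr_ge0; [apply: sqr_ge0| lra].
Qed.

Lemma step2 (R : rcfType) (D x y : R) : 1 <= D -> 1 <= x -> x <= 2*D-1 -> 1 <= y -> y <= 2*D-1 ->
  let M1 := 2*(D-1)/D + D*((x+y-2)/(x*y)) in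
  let M2 := (D-2+x)/x + (x-D)^+2/((2*D-x)*x) + ((D-2+y)/y + (y-D)^+2/((2*D-y)*y)) in
  M1 <= M2 /\ (1 < D -> M1 = M2 -> x = D /\ y = D).
Proof.
move=> D1 x1 x2 y1 y2 M1 M2.
have xD : 2*D - x != 0 by apply/eqP; lra.
have yD : 2*D - y != 0 by apply/eqP; lra.
have x0 : x != 0 by apply/eqP; lra.
have y0 : y != 0 by apply/eqP; lra.
have D0 : D != 0 by apply/eqP; lra.
have eM : M2 - M1 = Qp D (x-D) (y-D) / (D*x*y*(2*D-x)*(2*D-y)).
  by rewrite /M2 /M1 /Qp; field; rewrite xD yD x0 y0 D0.
have den0 : 0 < D*x*y*(2*D-x)*(2*D-y) by repeat apply: mulr_gt0; lra.
have [Q0 Qeq] : 0 <= Qp D (x-D) (y-D) /\ (1 < D -> Qp D (x-D) (y-D) = 0 -> x-D = 0 /\ y-D = 0).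
  by apply: Qprop => //; nra.
have h : 0 <= Qp D (x-D) (y-D) / (D*x*y*(2*D-x)*(2*D-y)) by apply: divr_ge0; lra.
split; first by rewrite -subr_ge0 eM.
move=> D1' e12.
have : Qp D (x-D) (y-D) = 0.
  move: eM; rewrite e12 subrr => /esym /eqP; rewrite mulf_eq0 invr_eq0 => /orP [/eqP //|/eqP].
  by move=> h0; move: den0; rewrite h0 ltxx.
move=> /(Qeq D1') [hx hy]; split; lra.
Qed.

Lemma step3 (R : rcfType) (D s0 n x : R) : n = D + s0 -> s0 <= D -> 1 <= x -> x < n ->
  (D-2+x)/x + (x-D)^+2/((2*D-x)*x) <= Gf D s0 (n-x) / x.
Proof.
move=> hn s0D x1 xn.
rewrite -subr_ge0.
have e : Gf D s0 (n-x) / x - ((D-2+x)/x + (x-D)^+2/((2*D-x)*x))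
   = (x-D)^+2/x * ((2*D-x) - (n-x))/((2*D-x)*(n-x)).
  rewrite /Gf hn; field.
  by rewrite !(subr_eq0, addr_eq0); repeat (apply/andP; split); apply/eqP; lra.
rewrite e; apply: divr_ge0; last by apply: mulr_ge0; lra.
apply: mulr_ge0; last lra.
by apply: divr_ge0; [apply: sqr_ge0 | lra].
Qed.

Lemma step4 (R : rcfType) (D s0 n x s : R) : 0 < s0 -> 1 <= x -> 1 <= s -> s <= n - x ->
  Gf D s0 (n-x) / x <= Gf D s0 s / x /\ (Gf D s0 (n-x) / x = Gf D s0 s / x -> s = n - x).
Proof.
move=> s00 x1 s1 sx.
have e : Gf D s0 s / x - Gf D s0 (n-x) / x = s0^+2/x * ((n-x) - s)/(s*(n-x)).
  rewrite /Gf; field.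
  by repeat (apply/andP; split); apply/eqP; lra.
have ex0 : 0 < x by lra.
have sx0 : 0 < s*(n-x) by apply: mulr_gt0; lra.
have s02 : 0 < s0^+2 by apply: exprn_gt0.
have hxs : 0 <= n - x - s by lra.
have h : 0 <= s0^+2/x * ((n-x) - s)/(s*(n-x)).
  apply: divr_ge0; last lra; apply: mulr_ge0; last lra.
  by apply: divr_ge0; lra.
split; first by rewrite -subr_ge0 e.
move=> heq; move: e; rewrite heq subrr => /esym z1.
move: hxs; rewrite le_eqVlt => /orP [/eqP h0|h']; first lra.
have : 0 < s0^+2/x * ((n-x) - s)/(s*(n-x)).
  by apply: divr_gt0 => //; apply: mulr_gt0 => //; apply: divr_gt0.
by rewrite z1 ltxx.
Qed.

Lemma edge_ineq (R : rcfType) (D s0 n x y s t K : R) :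
  1 <= s0 -> s0 <= D -> n = D + s0 -> 1 <= s -> 1 <= t ->
  1 <= x -> x <= n - s -> 1 <= y -> y <= n - t -> 0 <= K -> K^+2 = (D-1)/2 ->
  4*K*Num.sqrt((x+y-2)/(x*y)) <= Gf D s0 s / x + Gf D s0 t / y /\
  (1 < D -> 4*K*Num.sqrt((x+y-2)/(x*y)) = Gf D s0 s / x + Gf D s0 t / y ->
     [/\ x = D, y = D, s = s0 & t = s0]).
Proof.
move=> s01 s0D hn s1 t1 x1 xs y1 yt K0 K2.
have D1 : 1 <= D by lra.
have g0 : 0 <= (x+y-2)/(x*y) by apply: divr_ge0; nra.
have h1 := step1 R K D _ D1 K0 K2 g0.
have xD : x <= 2*D-1 by lra.
have yD : y <= 2*D-1 by lra.
have xn : x < n by lra.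
have yn : y < n by lra.
have [h2 h2e] := step2 R D x y D1 x1 xD y1 yD.
have h3x := step3 R D s0 n x hn s0D x1 xn.
have h3y := step3 R D s0 n y hn s0D y1 yn.
have s00 : 0 < s0 by lra.
have sx : s <= n - x by lra.
have ty : t <= n - y by lra.
have [h4x h4xe] := step4 R D s0 n x s s00 x1 s1 sx.
have [h4y h4ye] := step4 R D s0 n y t s00 y1 t1 ty.
move: h1 h2 h2e h3x h3y h4x h4xe h4y h4ye.
set L := 4 * K * _.
set M1 := 2 * (D - 1) / D + _.
set M2x := (D - 2 + x) / x + _.
set M2y := (D - 2 + y) / y + _.
set M3x := Gf D s0 (n - x) / x.
set M3y := Gf D s0 (n - y) / y.
set M4x := Gf D s0 s / x.
set M4y := Gf D s0 t / y.
move=> h1 h2 h2e h3x h3y h4x h4xe h4y h4ye.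
split; first lra.
move=> D1' Heq.
have e12 : M1 = M2x + M2y by lra.
have [ex ey] := h2e D1' e12.
have e4x : M3x = M4x by lra.
have e4y : M3y = M4y by lra.
have hs := h4xe e4x; have ht := h4ye e4y.
clear -hs ht ex ey hn.
split; lra.
Qed.


Local Open Scope ring_scope.

Theorem corollary3 (R : rcfType) (T : finType) (e : rel T) (chi : nat) :
  simple_graph e -> connected_graph e ->
  is_chromatic_number e chi -> (2 <= chi)%N -> (chi %| #|T|)%N ->
  let n : R := (#|T|)%:R in
  ABC R e <= n * Num.sqrt ((chi%:R * (n - 1) - n) / (2 * chi%:R)) /\
  (ABC R e = n * Num.sqrt ((chi%:R * (n - 1) - n) / (2 * chi%:R))
     <-> isomorphic_to_turan e chi).
Proof.
move=> sg conn [[f hf] hmin] chi2 dvd n.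
have [sym irr] := sg.
pose N := #|T|.
pose s0n := (N %/ chi)%N.
have hN : N = (s0n * chi)%N by rewrite divnK.
have chi0 : (0 < chi)%N by lia.
have [u0 [v0 e0]] : exists u v, e u v.
  case: (boolP [exists u, exists v, e u v]).
    by move=> /existsP [u /existsP [v h]]; exists u, v.
  move=> /negP hne; exfalso; apply: (hmin 1%N); first lia.
  exists (fun _ => ord0) => u v euv; exfalso; apply: hne.
  by apply/existsP; exists u; apply/existsP; exists v.
have uv0 : u0 != v0 by apply/eqP => h; move: e0; rewrite h irr.
have N2 : (2 <= N)%N.
  have := max_card (mem [set u0; v0]); rewrite cards2 uv0.
  by [].
have s01 : (1 <= s0n)%N by move: N2; rewrite hN; case: (s0n) => //.
have deg1 : forall v, (1 <= deg e v)%N.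
  move=> v.
  have [w vw] : exists w, v != w.
    case: (eqVneq v u0) => [->|h]; first by exists v0.
    by exists u0.
  have := conn v w; move/connectP => [p pth lst].
  case: p pth lst => [|x p] /=; first by move=> _ h; move: vw; rewrite h eqxx.
  move=> /andP [evx _] _; rewrite /deg card_gt0; apply/set0Pn; exists x; by rewrite inE.
pose sz v := #|[set w | f w == f v]|.
have sz1 : forall v, (1 <= sz v)%N.
  by move=> v; rewrite /sz card_gt0; apply/set0Pn; exists v; rewrite inE.
have degsz : forall v, (deg e v + sz v <= N)%N.
  move=> v.
  have sub : [set w | e v w] \subset ~: [set w | f w == f v].
    apply/subsetP => w; rewrite !inE => evw; rewrite eq_sym; exact: hf.
  have := subset_leq_card sub; have := cardsC [set w | f w == f v].
  rewrite /deg /sz /N; lia.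
pose Dn := (N - s0n)%N.
have s0Dn : (s0n <= Dn)%N.
  have : (s0n * 2 <= s0n * chi)%N by rewrite leq_mul2l chi2 orbT.
  rewrite /Dn -hN; lia.
have NDs : N = (Dn + s0n)%N by rewrite /Dn subnK // hN leq_pmulr.
pose s0 : R := s0n%:R.
pose D : R := Dn%:R.
have hn : n = D + s0 by rewrite /n /D /s0 -natrD -NDs.
have hnc : n = s0 * chi%:R by rewrite /n /s0 -natrM -hN.
have s01R : 1 <= s0 by rewrite /s0 ler1n.
have s0DR : s0 <= D by rewrite /s0 /D ler_nat.
have D1 : 1 <= D by lra.
pose K := Num.sqrt ((D-1)/2).
have K0 : 0 <= K by apply: sqrtr_ge0.
have K2 : K^+2 = (D-1)/2 by apply: sqr_sqrtr; lra.
have rhsE : Num.sqrt ((chi%:R * (n - 1) - n) / (2 * chi%:R)) = K.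
  have hD : D = s0 * chi%:R - s0 by lra.
  have c0 : chi%:R != 0 :> R by rewrite pnatr_eq0 -lt0n.
  rewrite /K; congr (Num.sqrt _); rewrite hD hnc; field; exact: c0.
rewrite rhsE.
have edge : forall E, E \in edges e ->
  4*K*Num.sqrt ((\sum_(v in E) (deg e v)%:R - 2) / (\prod_(v in E) deg e v)%:R)
    <= \sum_(w in E) Gf D s0 (sz w)%:R / (deg e w)%:R
  /\ (1 < D -> 4*K*Num.sqrt ((\sum_(v in E) (deg e v)%:R - 2) / (\prod_(v in E) deg e v)%:R)
    = \sum_(w in E) Gf D s0 (sz w)%:R / (deg e w)%:R -> forall w, w \in E -> deg e w = Dn /\ sz w = s0n).
  move=> E /edgesP [a [b [hab ->]]].
  have ab : a != b by apply/eqP => h; move: hab; rewrite h irr.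
  rewrite !big_pair //= natrM.
  have rx : forall v, (1 <= (deg e v)%:R :> R) /\ (1 <= (sz v)%:R :> R) /\ ((deg e v)%:R <= n - (sz v)%:R :> R).
    move=> v; rewrite !ler1n deg1 sz1; split => //; split => //.
    by rewrite lerBrDr /n -natrD ler_nat degsz.
  have [xa [sa hxa]] := rx a; have [xb [sb hxb]] := rx b.
  have [hle heq] := edge_ineq R D s0 n _ _ _ _ K s01R s0DR hn sa sb xa hxa xb hxb K0 K2.
  split => // D1' Heq w.
  have [ea eb sa' sb'] := heq D1' Heq.
  rewrite !inE => /orP [/eqP ->|/eqP ->]; split; apply/eqP; rewrite -(eqr_nat R);
    apply/eqP; rewrite ?ea ?eb ?sa' ?sb' //.
have degR0 : forall v, (deg e v)%:R != 0 :> R by move=> v; rewrite pnatr_eq0 -lt0n deg1.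
have sumG : \sum_(E in edges e) \sum_(w in E) Gf D s0 (sz w)%:R / (deg e w)%:R = \sum_w Gf D s0 (sz w)%:R.
  rewrite (handshake R T e (fun w => Gf D s0 (sz w)%:R / (deg e w)%:R) sg).
  by apply: eq_bigr => w _; rewrite mulrC -mulrA mulVf ?mulr1.
have suminv : \sum_w ((sz w)%:R : R)^-1 <= chi%:R.
  rewrite (partition_big f predT) //=.
  apply: (@le_trans _ _ (\sum_(j < chi) (1 : R))); last by rewrite sumr_const card_ord.
  apply: ler_sum => j _.
  rewrite (eq_bigr (fun _ => (#|[set w | f w == j]|%:R : R)^-1)); last first.
    by move=> i /eqP <-.
  rewrite sumr_const.
  have -> : #|(fun i => f i == j)| = #|[set w | f w == j]| by apply: eq_card => i; rewrite inE.
  case: (posnP #|[set w | f w == j]|) => [->|kp]; first by rewrite mulr0n.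
  have kn : (#|[set w | f w == j]|%:R : R) != 0 by rewrite pnatr_eq0 -lt0n.
  have -> : (#|[set w | f w == j]|%:R : R)^-1 *+ #|[set w | f w == j]|
     = (#|[set w | f w == j]|%:R : R)^-1 * #|[set w | f w == j]|%:R by rewrite mulr_natr.
  by rewrite mulVf.
have sumGle : \sum_w Gf D s0 (sz w)%:R <= 4*K*(n*K).
  have e1 : \sum_w Gf D s0 (sz w)%:R = n*(2*(D-1) - s0) + s0^+2 * \sum_w ((sz w)%:R : R)^-1.
    by rewrite /Gf big_split /= sumr_const -mulr_sumr /n -/N [N%:R * _]mulr_natl.
  rewrite e1.
  have h2 : s0^+2 * \sum_w ((sz w)%:R : R)^-1 <= s0^+2 * chi%:R.
    by apply: ler_wpM2l => //; apply: sqr_ge0.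
  have h3 : s0^+2 * chi%:R = s0 * n by rewrite hnc; ring.
  have h4 : 4*K*(n*K) = 2*n*(D-1).
    by rewrite (_ : 4*K*(n*K) = 4*n*K^+2); [rewrite K2; field | ring].
  rewrite h4; lra.
have abcE : 4*K*ABC R e = \sum_(E in edges e)
   4*K*Num.sqrt ((\sum_(v in E) (deg e v)%:R - 2) / (\prod_(v in E) deg e v)%:R).
  by rewrite /ABC mulr_sumr.
have abc_le : 4*K*ABC R e <= \sum_(E in edges e) \sum_(w in E) Gf D s0 (sz w)%:R / (deg e w)%:R.
  by rewrite abcE; apply: ler_sum => E hE; case: (edge E hE).
have deg_case : Dn = 1%N -> (forall v, deg e v = 1%N /\ sz v = 1%N) /\ s0n = 1%N.
  move=> D1n.
  have s1 : s0n = 1%N by clear -D1n s0Dn s01; lia.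
  split => // v; have := degsz v; have := deg1 v; have := sz1 v.
  by clear -NDs D1n s1; lia.
have KD1 : Dn = 1%N -> K = 0.
  by move=> D1n; rewrite /K /D D1n subrr mul0r sqrtr0.
have abc0 : Dn = 1%N -> ABC R e = 0.
  move=> /deg_case [hd _]; rewrite /ABC big1 // => E /edgesP [a [b [hab ->]]].
  have ab : a != b by apply/eqP => h; move: hab; rewrite h irr.
  rewrite !big_pair //= natrM !(proj1 (hd _)).
  have -> : ((1%N)%:R + (1%N)%:R - 2 : R) = 0 by ring.
  by rewrite mul0r sqrtr0.
have Dbig : Dn <> 1%N -> 1 < D /\ 0 < K.
  move=> Dn1.
  have D2 : (2 <= Dn)%N by clear -s0Dn s01 Dn1; lia.
  have D1' : 1 < D by rewrite /D ltr1n.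
  split => //.
  by rewrite /K sqrtr_gt0; apply: divr_gt0; lra.
have main_le : 4*K*ABC R e <= 4*K*(n*K) by rewrite -sumG in sumGle; exact: le_trans abc_le sumGle.
split.
  case: (eqVneq Dn 1%N) => [D1n|Dn1].
    by rewrite abc0 // (KD1 D1n) mulr0.
  have [_ Kp] := Dbig (elimN eqP Dn1). move: main_le; rewrite -!mulrA. by rewrite (ler_pM2l (_ : (0:R) < 4)) // ler_pM2l.
split.
  move=> heq.
  have struct : forall v, deg e v = Dn /\ sz v = s0n.
    case: (eqVneq Dn 1%N) => [D1n|Dn1].
      have [hd hs] := deg_case D1n.
      by move=> v; rewrite D1n hs; apply: hd.
    have [D1' Kp] := Dbig (elimN eqP Dn1).
    pose dif (E : {set T}) := \sum_(w in E) Gf D s0 (sz w)%:R / (deg e w)%:R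
        - 4*K*Num.sqrt ((\sum_(v in E) (deg e v)%:R - 2) / (\prod_(v in E) deg e v)%:R).
    have dge : forall E, E \in edges e -> 0 <= dif E.
      by move=> E hE; rewrite /dif subr_ge0; case: (edge E hE).
    have dsum : \sum_(E in edges e) dif E = 0.
      apply/eqP; rewrite eq_le sumr_ge0 ?andbT //.
      rewrite /dif sumrB -abcE sumG heq subr_le0 //.
    move=> v.
    have := deg1 v; rewrite /deg card_gt0 => /set0Pn [x]; rewrite inE => evx.
    have hE : [set v; x] \in edges e by apply/edgesP; exists v, x.
    have := psumr_eq0P dge dsum hE; rewrite /dif => /eqP; rewrite subr_eq0 => /eqP /esym h.
    by apply: (proj2 (edge _ hE) D1' h v); rewrite !inE eqxx.
  apply: (struct_iso T e chi s0n f sg hf hN) => v; have [h1 h2] := struct v.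
    by rewrite /sz in h2; rewrite h1 h2 -NDs.
  exact: h2.
move=> iso.
have hd := turan_deg T e chi s0n chi0 hN iso.
have Dpos : 0 < D by lra.
have termc : forall E, E \in edges e ->
    Num.sqrt ((\sum_(v in E) (deg e v)%:R - 2) / (\prod_(v in E) deg e v)%:R) = 2*K/D.
  move=> E /edgesP [a [b [hab ->]]].
  have ab : a != b by apply/eqP => h; move: hab; rewrite h irr.
  rewrite !big_pair //= natrM !hd -/N -/Dn -/D.
  have -> : (D + D - 2)/(D*D) = (2*K/D)^+2.
    rewrite (_ : (2*K/D)^+2 = 4*K^+2/D^+2); last by field; rewrite gt_eqF.
    by rewrite K2; field; rewrite gt_eqF.
  rewrite sqrtr_sqr ger0_norm //.
  by apply: divr_ge0; lra.
have -> : ABC R e = \sum_(E in edges e) \sum_(w in E) K/D.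
  rewrite /ABC; apply: eq_bigr => E hE; rewrite termc //.
  case/edgesP: hE => [a [b [hab ->]]].
  have ab : a != b by apply/eqP => h; move: hab; rewrite h irr.
  by rewrite big_pair //=; field; rewrite gt_eqF.
apply: (etrans (handshake R T e (fun _ => K/D) sg)).
rewrite (eq_bigr (fun _ => K)); last first.
  by move=> w _; rewrite hd -/N -/Dn -/D mulrC -mulrA mulVf ?mulr1 // gt_eqF.
by rewrite sumr_const /n -/N mulr_natl.
Qed.
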